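(* The relation $t\subseteq\mathbb{N}\times\mathbb{T}$ defined below is the graph of a function $t:\mathbb{N}\to\mathbb{T}$, and this function satisfies $t(n(X))=X$ for all $X\in\mathbb{T}$ and $n(t(x))=x$ for all $x\in\mathbb{N}$.
   Context: Let $\mathbb{T}$ be the set of finite terms defined inductively by: the constant $e\in\mathbb{T}$; and if $X\in\mathbb{T}$ and $Xs$ is a finite (possibly empty) list of elements of $\mathbb{T}$, then $v(X,Xs)\in\mathbb{T}$ and $w(X,Xs)\in\mathbb{T}$. Write $[\,]$ for the empty list and $[Y|Xs]$ for the list with first element $Y$ followed by the list $Xs$ (so $[e,Y|Ys]$ is the list starting with $e$, then $Y$, then $Ys$). Define $n:\mathbb{T}\to\mathbb{N}$ by $n(e)=0$, $n(v(X,[\,]))=2^{n(X)+1}-1$, $n(v(X,[Y|Xs]))=(n(w(Y,Xs))+1)2^{n(X)+1}-1$, $n(w(X,[\,]))=2^{n(X)+2}-2$, $n(w(X,[Y|Xs]))=(n(v(Y,Xs))+2)2^{n(X)+1}-2$. Let $\sigma\subseteq\mathbb{T}\times\mathbb{T}$ be the smallest relation such that (for all terms and lists of the appropriate kinds): (1) $\sigma(e,v(e,[\,]))$; (2) $\sigma(v(e,[\,]),w(e,[\,]))$; (3) if $\sigma(X,X')$ then $\sigma(v(e,[X|Xs]),w(X',Xs))$; (4) if $\sigma(P,T)$ then $\sigma(v(T,Xs),w(e,[P|Xs]))$; (5) if $\sigma(T,T')$ then $\sigma(w(T,[\,]),v(T',[\,]))$; (6) $\sigma(w(Z,[e]),v(Z,[e]))$;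 (7) if $\sigma(Y,Y')$ then $\sigma(w(Z,[e,Y|Ys]),v(Z,[Y'|Ys]))$; (8) if $\sigma(X',X)$ then $\sigma(w(Z,[X|Xs]),v(Z,[e,X'|Xs]))$. Let $O\subseteq\mathbb{T}\times\mathbb{T}$ consist of the pairs $(e,v(e,[\,]))$, $(w(X,Xs),v(e,[X|Xs]))$, and $(v(X,Xs),v(X',Xs))$ whenever $\sigma(X,X')$. Let $I\subseteq\mathbb{T}\times\mathbb{T}$ consist of the pairs $(e,w(e,[\,]))$, $(v(X,Xs),w(e,[X|Xs]))$, and $(w(X,Xs),w(X',Xs))$ whenever $\sigma(X,X')$. Let $t\subseteq\mathbb{N}\times\mathbb{T}$ be the smallest relation such that: $(0,e)\in t$; if $x>0$ is odd, $((x-1)/2,A)\in t$ and $(A,R)\in O$, then $(x,R)\in t$; if $x>0$ is even, $(x/2-1,A)\in t$ and $(A,R)\in I$, then $(x,R)\in t$. *)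

(* Defs.v *)
From Stdlib Require Import List Arith.
Import ListNotations.

Inductive term : Type :=
| e : term
| v : term -> list term -> term
| w : term -> list term -> term.

(* For a = n(X), the inner function g Xs a returns the pair
   (n(v(X,Xs)), n(w(X,Xs))); the two components are computed jointly
   since n(v(X,[Y|Xs])) uses n(w(Y,Xs)) and vice versa. *)
Fixpoint n (t : term) : nat :=
  let g := fix g (l : list term) (a : nat) {struct l} : nat * nat :=
      match l with
      | [] => (2 ^ (a + 1) - 1, 2 ^ (a + 2) - 2)
      | Y :: ys =>
          let p := g ys (n Y) in
          ((snd p + 1) * 2 ^ (a + 1) - 1, (fst p + 2) * 2 ^ (a + 1) - 2)
      end in
  match t with
  | e => 0
  | v X xs => fst (g xs (n X))
  | w X xs => snd (g xs (n X))
  end.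

Lemma n_e : n e = 0. Proof. reflexivity. Qed.
Lemma n_v_nil X : n (v X []) = 2 ^ (n X + 1) - 1. Proof. reflexivity. Qed.
Lemma n_v_cons X Y xs :
  n (v X (Y :: xs)) = (n (w Y xs) + 1) * 2 ^ (n X + 1) - 1.
Proof. reflexivity. Qed.
Lemma n_w_nil X : n (w X []) = 2 ^ (n X + 2) - 2. Proof. reflexivity. Qed.
Lemma n_w_cons X Y xs :
  n (w X (Y :: xs)) = (n (v Y xs) + 2) * 2 ^ (n X + 1) - 2.
Proof. reflexivity. Qed.

Inductive sigma : term -> term -> Prop :=
| sigma1 : sigma e (v e [])
| sigma2 : sigma (v e []) (w e [])
| sigma3 : forall X X' xs, sigma X X' -> sigma (v e (X :: xs)) (w X' xs)
| sigma4 : forall P T xs, sigma P T -> sigma (v T xs) (w e (P :: xs))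
| sigma5 : forall T T', sigma T T' -> sigma (w T []) (v T' [])
| sigma6 : forall Z, sigma (w Z [e]) (v Z [e])
| sigma7 : forall Z Y Y' ys, sigma Y Y' ->
    sigma (w Z (e :: Y :: ys)) (v Z (Y' :: ys))
| sigma8 : forall Z X X' xs, sigma X' X ->
    sigma (w Z (X :: xs)) (v Z (e :: X' :: xs)).

Inductive O : term -> term -> Prop :=
| O1 : O e (v e [])
| O2 : forall X xs, O (w X xs) (v e (X :: xs))
| O3 : forall X X' xs, sigma X X' -> O (v X xs) (v X' xs).

Inductive I : term -> term -> Prop :=
| I1 : I e (w e [])
| I2 : forall X xs, I (v X xs) (w e (X :: xs))
| I3 : forall X X' xs, sigma X X' -> I (w X xs) (w X' xs).

Inductive t : nat -> term -> Prop :=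
| t0 : t 0 e
| t_odd : forall x A R, 0 < x -> Nat.odd x = true ->
    t ((x - 1) / 2) A -> O A R -> t x R
| t_even : forall x A R, 0 < x -> Nat.even x = true ->
    t (x / 2 - 1) A -> I A R -> t x R.

(* Main.v *)
Require Import Defs.
From Stdlib Require Import List Arith Lia.
Import ListNotations.

Lemma pows a : 2^(a+2) = 2*2^(a+1) /\ 2^(S a+1) = 2*2^(a+1) /\
  2^(S a+2) = 4*2^(a+1) /\ 2^(a+1) >= 1.
Proof.
  replace (a+2) with (S (a+1)) by lia. replace (S a + 1) with (S (a+1)) by lia.
  replace (S a + 2) with (S (S (a+1))) by lia.
  rewrite !Nat.pow_succ_r'. assert (2^(a+1) <> 0) by (apply Nat.pow_nonzero; lia).
  lia.
Qed.

Lemma arithC X X' xs : n X' = S (n X) ->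
  n (v X' xs) = 2 * n (v X xs) + 1 /\ n (w X' xs) = 2 * n (w X xs) + 2.
Proof.
  intros H. destruct xs as [|Y ys].
  - rewrite !n_v_nil, !n_w_nil, H. destruct (pows (n X)) as (H1&H2&H3&H4).
    rewrite H1, H2, H3. nia.
  - rewrite !n_v_cons, !n_w_cons, H. destruct (pows (n X)) as (H1&H2&H3&H4).
    rewrite H2. nia.
Qed.

Lemma sigma_n X Y : sigma X Y -> n Y = S (n X).
Proof.
  induction 1.
  - reflexivity.
  - reflexivity.
  - rewrite n_v_cons. rewrite (proj2 (arithC _ _ xs IHsigma)). simpl. lia.
  - rewrite n_w_cons. rewrite (proj1 (arithC _ _ xs IHsigma)). simpl. lia.
  - rewrite n_v_nil, n_w_nil, IHsigma. destruct (pows (n T)) as (H1&H2&H3&H4).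
    rewrite H1, H2. lia.
  - rewrite n_v_cons, n_w_cons. destruct (pows (n Z)) as (H1&H2&H3&H4). simpl (n (w e [])). simpl (n (v e [])). nia.
  - rewrite n_v_cons, n_w_cons, n_v_cons.
    rewrite (proj2 (arithC _ _ ys IHsigma)). destruct (pows (n Z)) as (H1&H2&H3&H4).
    simpl (n e). simpl (2^(0+1)). nia.
  - rewrite n_v_cons, n_w_cons, n_w_cons.
    rewrite (proj1 (arithC _ _ xs IHsigma)). destruct (pows (n Z)) as (H1&H2&H3&H4).
    simpl (n e). simpl (2^(0+1)). nia.
Qed.

Lemma sigma_not_e P : ~ sigma P e.
Proof. intros H; inversion H. Qed.

Lemma sigma_det2 X Y1 : sigma X Y1 ->
  (forall Y2, sigma X Y2 -> Y1 = Y2) /\ (forall X2, sigma X2 Y1 -> X = X2).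
Proof.
  induction 1; split; intros Z2 H2; inversion H2; subst;
    try reflexivity; try (exfalso; eapply sigma_not_e; eassumption);
    try (f_equal; auto; fail).
  all: try (rewrite (proj1 IHsigma _ ltac:(eassumption)); reflexivity).
  all: try (rewrite (proj2 IHsigma _ ltac:(eassumption)); reflexivity).
Qed.

Lemma sigma_det X Y1 Y2 : sigma X Y1 -> sigma X Y2 -> Y1 = Y2.
Proof. intros H1 H2. exact (proj1 (sigma_det2 _ _ H1) _ H2). Qed.

Fixpoint sz (x : term) : nat :=
  match x with
  | e => 1
  | v a l => S (sz a + list_sum (map sz l))
  | w a l => S (sz a + list_sum (map sz l))
  end.

Lemma succ_pred_k k : forall X, sz X < k ->
  (exists Y, sigma X Y) /\ (X <> e -> exists Y, sigma Y X).
Proof.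
  induction k as [|k IH]; intros X Hs; [lia|].
  destruct X as [|X0 xs|X0 xs].
  - split; [eexists; constructor | intros []; reflexivity].
  - split.
    + destruct X0 as [|a l|a l].
      * destruct xs as [|Y ys]; [eexists; constructor|].
        destruct (proj1 (IH Y ltac:(simpl in *; lia))) as [Y' HY].
        eexists; apply sigma3; eassumption.
      * destruct (proj2 (IH (v a l) ltac:(simpl in *; lia)) ltac:(discriminate)) as [P HP].
        eexists; apply sigma4; eassumption.
      * destruct (proj2 (IH (w a l) ltac:(simpl in *; lia)) ltac:(discriminate)) as [P HP].
        eexists; apply sigma4; eassumption.
    + intros _. destruct xs as [|Y' ys].
      * destruct X0 as [|a l|a l]; [eexists; constructor|..].
        -- destruct (proj2 (IH (v a l) ltac:(simpl in *; lia)) ltac:(discriminate)) as [P HP].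
           eexists; apply sigma5; eassumption.
        -- destruct (proj2 (IH (w a l) ltac:(simpl in *; lia)) ltac:(discriminate)) as [P HP].
           eexists; apply sigma5; eassumption.
      * destruct Y' as [|a l|a l].
        -- destruct ys as [|X' xs'].
           ++ eexists; apply sigma6.
           ++ destruct (proj1 (IH X' ltac:(simpl in *; lia))) as [X HX].
              eexists; apply sigma8; eassumption.
        -- destruct (proj2 (IH (v a l) ltac:(simpl in *; lia)) ltac:(discriminate)) as [P HP].
           eexists; apply sigma7; eassumption.
        -- destruct (proj2 (IH (w a l) ltac:(simpl in *; lia)) ltac:(discriminate)) as [P HP].
           eexists; apply sigma7; eassumption.
  - split.
    + destruct xs as [|X1 xs'].
      * destruct (proj1 (IH X0 ltac:(simpl in *; lia))) as [T HT].
        eexists; apply sigma5; eassumption.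
      * destruct X1 as [|a l|a l].
        -- destruct xs' as [|Y ys]; [eexists; apply sigma6|].
           destruct (proj1 (IH Y ltac:(simpl in *; lia))) as [Y' HY].
           eexists; apply sigma7; eassumption.
        -- destruct (proj2 (IH (v a l) ltac:(simpl in *; lia)) ltac:(discriminate)) as [P HP].
           eexists; apply sigma8; eassumption.
        -- destruct (proj2 (IH (w a l) ltac:(simpl in *; lia)) ltac:(discriminate)) as [P HP].
           eexists; apply sigma8; eassumption.
    + intros _. destruct X0 as [|a l|a l].
      * destruct xs as [|P xs']; [eexists; constructor|].
        destruct (proj1 (IH P ltac:(simpl in *; lia))) as [T HT].
        eexists; apply sigma4; eassumption.
      * destruct (proj2 (IH (v a l) ltac:(simpl in *; lia)) ltac:(discriminate)) as [P HP].
        eexists; apply sigma3; eassumption.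
      * destruct (proj2 (IH (w a l) ltac:(simpl in *; lia)) ltac:(discriminate)) as [P HP].
        eexists; apply sigma3; eassumption.
Qed.

Lemma succ_ex X : exists Y, sigma X Y.
Proof. exact (proj1 (succ_pred_k (S (sz X)) X ltac:(lia))). Qed.
Lemma pred_ex X : X <> e -> exists Y, sigma Y X.
Proof. exact (proj2 (succ_pred_k (S (sz X)) X ltac:(lia))). Qed.

Lemma O_n A R : O A R -> n R = 2 * n A + 1.
Proof.
  destruct 1.
  - reflexivity.
  - rewrite n_v_cons. simpl (n e). simpl (2^(0+1)). lia.
  - exact (proj1 (arithC _ _ xs (sigma_n _ _ H))).
Qed.

Lemma I_n A R : I A R -> n R = 2 * n A + 2.
Proof.
  destruct 1.
  - reflexivity.
  - rewrite n_w_cons. simpl (n e). simpl (2^(0+1)). lia.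
  - exact (proj2 (arithC _ _ xs (sigma_n _ _ H))).
Qed.

Lemma O_det A R1 R2 : O A R1 -> O A R2 -> R1 = R2.
Proof.
  intros H1 H2; inversion H1; inversion H2; subst; try discriminate; try congruence.
  injection H5; intros; subst. f_equal. eapply sigma_det; eassumption.
Qed.

Lemma I_det A R1 R2 : I A R1 -> I A R2 -> R1 = R2.
Proof.
  intros H1 H2; inversion H1; inversion H2; subst; try discriminate; try congruence.
  injection H5; intros; subst. f_equal. eapply sigma_det; eassumption.
Qed.

Lemma O_ex A : exists R, O A R.
Proof.
  destruct A as [|X xs|X xs]; [eexists; constructor| |eexists; constructor].
  destruct (succ_ex X) as [X' H]. eexists; apply O3; eassumption.
Qed.

Lemma I_ex A : exists R, I A R.
Proof.
  destruct A as [|X xs|X xs]; [eexists; constructor|eexists; constructor|].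
  destruct (succ_ex X) as [X' H]. eexists; apply I3; eassumption.
Qed.

Lemma oe x : Nat.odd x = true -> Nat.even x = true -> False.
Proof. intros H1 H2. rewrite <- Nat.negb_even, H2 in H1. discriminate. Qed.

Lemma t_det x X : t x X -> forall Y, t x Y -> X = Y.
Proof.
  induction 1; intros Y HY; inversion HY; subst; try lia;
    try (exfalso; eapply oe; eassumption).
  - reflexivity.
  - rewrite (IHt _ H5) in H2. eapply O_det; eassumption.
  - rewrite (IHt _ H5) in H2. eapply I_det; eassumption.
Qed.

Lemma odd_form x : Nat.odd x = true -> x = 2 * ((x - 1) / 2) + 1.
Proof.
  intros H. apply Nat.odd_spec in H. destruct H as [m ->].
  replace (2 * m + 1 - 1) with (m * 2) by lia. rewrite Nat.div_mul; lia.
Qed.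

Lemma even_form x : Nat.even x = true -> x = 2 * (x / 2).
Proof.
  intros H. apply Nat.even_spec in H. destruct H as [m ->].
  replace (2 * m) with (m * 2) by lia. rewrite Nat.div_mul; lia.
Qed.

Lemma t_n x X : t x X -> n X = x.
Proof.
  induction 1.
  - reflexivity.
  - rewrite (O_n _ _ H2), IHt. symmetry. now apply odd_form.
  - rewrite (I_n _ _ H2), IHt. pose proof (even_form _ H0). lia.
Qed.

Lemma odd_2k k : Nat.odd (2 * k + 1) = true.
Proof. apply Nat.odd_spec. exists k. reflexivity. Qed.
Lemma even_2k k : Nat.even (2 * k + 2) = true.
Proof. apply Nat.even_spec. exists (k+1). lia. Qed.

Lemma t_ex x : exists X, t x X.
Proof.
  induction x as [x IH] using lt_wf_ind.
  destruct x as [|x']; [eexists; constructor|].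
  destruct (Nat.Even_or_Odd (S x')) as [[m Hm]|[m Hm]].
  - destruct (IH (S x' / 2 - 1)) as [A HA].
    { rewrite Hm. replace (2*m) with (m*2) by lia. rewrite Nat.div_mul; lia. }
    destruct (I_ex A) as [R HR]. exists R. eapply t_even; try eassumption; [lia|].
    apply Nat.even_spec. exists m. exact Hm.
  - destruct (IH ((S x' - 1) / 2)) as [A HA].
    { rewrite Hm. replace (2*m+1-1) with (m*2) by lia. rewrite Nat.div_mul; lia. }
    destruct (O_ex A) as [R HR]. exists R. eapply t_odd; try eassumption; [lia|].
    apply Nat.odd_spec. exists m. exact Hm.
Qed.

Lemma term_eq_e X : X = e \/ X <> e.
Proof. destruct X; [left; reflexivity|right; discriminate|right; discriminate]. Qed.

Lemma OI_pre X : X <> e -> (exists A, O A X) \/ (exists A, I A X).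
Proof.
  intros Hne. destruct X as [|X0 xs|X0 xs]; [congruence|left|right].
  - destruct X0 as [|a l|a l].
    + destruct xs as [|Y ys]; [eexists; constructor|eexists; constructor].
    + destruct (pred_ex (v a l) ltac:(discriminate)) as [P HP]. eexists; apply O3; eassumption.
    + destruct (pred_ex (w a l) ltac:(discriminate)) as [P HP]. eexists; apply O3; eassumption.
  - destruct X0 as [|a l|a l].
    + destruct xs as [|Y ys]; [eexists; constructor|eexists; constructor].
    + destruct (pred_ex (v a l) ltac:(discriminate)) as [P HP]. eexists; apply I3; eassumption.
    + destruct (pred_ex (w a l) ltac:(discriminate)) as [P HP]. eexists; apply I3; eassumption.
Qed.

Lemma t_nX m : forall X, n X = m -> t m X.
Proof.
  induction m as [m IH] using lt_wf_ind. intros X HX.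
  destruct (term_eq_e X) as [->|Hne]; [subst; constructor|].
  destruct (OI_pre X Hne) as [[A HA]|[A HA]].
  - pose proof (O_n _ _ HA) as Hn.
    assert (Hd : (m - 1) / 2 = n A).
    { rewrite <- HX, Hn. replace (2 * n A + 1 - 1) with (n A * 2) by lia.
      rewrite Nat.div_mul; lia. }
    eapply t_odd; [lia| | |exact HA].
    + subst m. rewrite Hn. apply odd_2k.
    + rewrite Hd. apply IH; [lia|reflexivity].
  - pose proof (I_n _ _ HA) as Hn.
    assert (Hd : m / 2 - 1 = n A).
    { rewrite <- HX, Hn. replace (2 * n A + 2) with ((n A + 1) * 2) by lia.
      rewrite Nat.div_mul; lia. }
    eapply t_even; [lia| | |exact HA].
    + subst m. rewrite Hn. apply even_2k.
    + rewrite Hd. apply IH; [lia|reflexivity].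
Qed.

Theorem proposition4 :
  (forall x : nat, exists! X : term, t x X) /\
  (forall X : term, t (n X) X) /\
  (forall (x : nat) (X : term), t x X -> n X = x).
Proof.
  split; [|split].
  - intros x. destruct (t_ex x) as [X HX]. exists X. split; [exact HX|].
    intros Y HY. eapply t_det; eassumption.
  - intros X. apply t_nX. reflexivity.
  - exact t_n.
Qed.
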